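(* Let $\mathcal{H}$ be a family of simple graphs with $\rho:=\min\{\chi(H):H\in\mathcal{H}\}\geq 3$. Then \[\mathcal{E}_\mathcal{H}(k)=\Bigl(1+\frac{1}{\rho-2}+o(1)\Bigr)k,\] where $o(1)\to 0$ as $k\to\infty$.
   Context: All graphs are finite, simple and 2-uniform, without isolated vertices. For a graph $G$ and a family of graphs $\mathcal{H}$, $\operatorname{ex}(G,\mathcal{H})$ is the maximum number of edges of a subgraph $F\subseteq G$ that contains no member of $\mathcal{H}$ as a subgraph. For a positive integer $k$, $\mathcal{E}_\mathcal{H}(k):=\sup\{e(G): G \text{ a simple graph with } \operatorname{ex}(G,\mathcal{H})<k\}$. $\chi$ denotes chromatic number. *)

(* Defs.v *)
From HB Require Import structures.
From mathcomp Require Import all_boot all_order all_algebra.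
From mathcomp Require Import boolp.
Set Implicit Arguments. Unset Strict Implicit. Unset Printing Implicit Defensive.
Import Order.TTheory GRing.Theory Num.Theory.

Record sgraph := SGraph {
  nv : nat;
  adj : rel 'I_nv;
  adj_sym : symmetric adj;
  adj_irr : irreflexive adj }.

Definition no_isolated (G : sgraph) : Prop :=
  forall x : 'I_(nv G), exists y, adj x y.

(* edge set: unordered edges encoded as ordered pairs (x, y) with x < y *)
Definition edges (G : sgraph) : {set 'I_(nv G) * 'I_(nv G)} :=
  [set p : 'I_(nv G) * 'I_(nv G) | (val p.1 < val p.2)%N && adj p.1 p.2].

Definition nedges (G : sgraph) : nat := #|edges G|.

Definition fadj n (F : {set 'I_n * 'I_n}) (x y : 'I_n) : bool :=
  ((x, y) \in F) || ((y, x) \in F).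

Definition contains n (F : {set 'I_n * 'I_n}) (H : sgraph) : Prop :=
  exists f : 'I_(nv H) -> 'I_n,
    injective f /\ forall x y, adj x y -> fadj F (f x) (f y).

Definition Hfree n (F : {set 'I_n * 'I_n}) (fam : sgraph -> Prop) : Prop :=
  forall H, fam H -> ~ contains F H.

Definition ex (G : sgraph) (fam : sgraph -> Prop) : nat :=
  \max_(F : {set 'I_(nv G) * 'I_(nv G)} |
          (F \subset edges G) && `[< Hfree F fam >]) #|F|.

Definition colorable (G : sgraph) (k : nat) : Prop :=
  exists c : 'I_(nv G) -> 'I_k, forall x y, adj x y -> c x != c y.

Definition is_chi (G : sgraph) (k : nat) : Prop :=
  colorable G k /\ forall j, colorable G j -> (k <= j)%N.

Definition is_min_chi (fam : sgraph -> Prop) (rho : nat) : Prop :=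
  (exists H, fam H /\ is_chi H rho) /\
  (forall H k, fam H -> is_chi H k -> (rho <= k)%N).

(* Main.v *)
Require Import Defs.
From HB Require Import structures.
From mathcomp Require Import all_boot all_order all_algebra.
From mathcomp Require Import zify ring.
From mathcomp Require Import boolp.
Import Order.TTheory GRing.Theory Num.Theory.
Set Implicit Arguments. Unset Strict Implicit. Unset Printing Implicit Defensive.


Definition degS (V : finType) (e : rel V) (S : {set V}) (x : V) : nat :=
  \sum_(y in S) e x y.
Definition E2 (V : finType) (e : rel V) (S : {set V}) : nat :=
  \sum_(x in S) degS e S x.

Lemma degS_D1 (V : finType) (e : rel V) (S : {set V}) x z :
  x \in S -> degS e S z = e z x + degS e (S :\ x) z.
Proof.
move=> xS; rewrite /degS (bigD1 x) //=; congr (_ + _).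
by apply: eq_bigl => y; rewrite in_setD1 andbC.
Qed.

Lemma E2D1 (V : finType) (e : rel V) (S : {set V}) x :
  symmetric e -> irreflexive e -> x \in S ->
  E2 e S = E2 e (S :\ x) + 2 * degS e S x.
Proof.
move=> hs hi xS; rewrite /E2 (bigD1 x) //=.
have -> : \sum_(i in S | i != x) degS e S i =
          \sum_(i in S :\ x) (e x i + degS e (S :\ x) i).
  rewrite [RHS](eq_bigl (fun i => (i \in S) && (i != x))); last first.
    by move=> i; rewrite in_setD1 andbC.
  by apply: eq_bigr => i _; rewrite (degS_D1 e i xS) hs.
rewrite big_split /=.
have -> : \sum_(i in S :\ x) e x i = degS e S x.
  by rewrite (degS_D1 e x xS) hi.
lia.
Qed.

Lemma degS_le (V : finType) (e : rel V) (S : {set V}) x :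
  irreflexive e -> x \in S -> degS e S x <= #|S| - 1.
Proof.
move=> hi xS; rewrite (degS_D1 e x xS) hi add0n (cardsD1 x S) xS add1n subSS.
rewrite subn0 /degS -[#|S :\ x|]sum1_card; apply: leq_sum => i _; by case: (e x i).
Qed.

Lemma E2_le (V : finType) (e : rel V) (S : {set V}) :
  irreflexive e -> E2 e S <= #|S| * (#|S| - 1).
Proof.
move=> hi; rewrite /E2 -sum_nat_const; apply: leq_sum => x xS; exact: degS_le.
Qed.


Lemma dense_mindeg (V : finType) (e : rel V) (m r N1 : nat) :
  symmetric e -> irreflexive e -> 1 <= r -> 2 * r <= m -> m + 2 <= N1 ->
  m * (N1 * (N1 - 1)) < #|V| * (#|V| - 1) ->
  (m * r - m + 3 * r) * (#|V| * (#|V| - 1)) <= m * r * E2 e setT ->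
  exists S : {set V}, N1 < #|S| /\
    forall x, x \in S -> (m * r + r) * #|S| <= m * r * degS e S x + m * #|S|.
Proof.
move=> hs hi r1 m2r mN1 hN hE.
pose P (S : {set V}) := #|S| * (#|S| - 1).
pose c := m * r - m + 2 * r.
have PleV : forall S : {set V}, P S <= #|V| * (#|V| - 1).
  move=> S; rewrite /P; have h : #|S| <= #|V| by rewrite -cardsT subset_leq_card // subsetT.
  by apply: leq_mul => //; apply: leq_sub2r.
pose phi (S : {set V}) := m * r * E2 e S + c * (#|V| * (#|V| - 1) - P S).
case: (@arg_maxnP _ setT xpredT phi (erefl true)) => S _ Smax.
have h1 := Smax setT erefl.
have hPT : P setT = #|V| * (#|V| - 1) by rewrite /P cardsT.
have hES := E2_le S hi.
have key : #|V| * (#|V| - 1) <= m * P S.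
  move: h1; rewrite /phi hPT subnn muln0 addn0 => h1.
  have hmr : m <= m * r by rewrite leq_pmulr.
  have : (m * r - m + 3 * r) * (#|V| * (#|V| - 1)) <=
         m * r * P S + c * (#|V| * (#|V| - 1) - P S).
    apply: (leq_trans hE); apply: (leq_trans h1); rewrite leq_add2r.
    by rewrite leq_mul2l hES orbT.
  move: (PleV S); rewrite /c; set a := #|V| * (#|V| - 1); set b := P S.
  set X := m * r => hb h.
  have e1 : m * r - m + 3 * r = c + r by rewrite /c; lia.
  rewrite -/X e1 mulnDl mulnBr in h.
  have hcb : c * b <= c * a by rewrite leq_mul2l hb orbT.
  have h3 : r * a + c * b <= X * b by lia.
  have h4 : X * b - c * b <= m * b.
    rewrite -mulnBl leq_mul2r; apply/orP; right; rewrite /c /X; lia.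
  have h5 : a <= r * a by rewrite leq_pmull.
  lia.
have big : N1 < #|S|.
  rewrite ltnNge; apply/negP => hS.
  have : P S <= N1 * (N1 - 1) by rewrite /P; apply: leq_mul => //; apply: leq_sub2r.
  move: key hN; set a := #|V| * (#|V| - 1); set b := P S => h1' h2' h3'.
  have : m * b <= m * (N1 * (N1 - 1)) by rewrite leq_mul2l h3' orbT.
  lia.
exists S; split => // x xS.
have h2 := Smax (S :\ x) erefl.
move: h2; rewrite /phi (E2D1 hs hi xS) /P (cardsD1 x S) xS add1n /=.
rewrite subSS subn0.
have hPS := PleV S; rewrite /P (cardsD1 x S) xS add1n subSS subn0 in hPS big.
set n := #|S :\ x| in hPS big *.
set a := #|V| * (#|V| - 1) in hPS *.
set X := m * r; set d := degS e S x; set E := E2 e (S :\ x).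
have hn : n.+1 * n = n * (n-1) + 2 * n.
  case: (n) => [|k]; first by [].
  rewrite subSS subn0; nia.
have ea : a - n * (n - 1) = (a - n.+1 * n) + 2 * n by lia.
rewrite ea mulnDr => h.
have h3 : c * n <= X * d.
  have : c * (2 * n) <= X * (2 * d) by lia.
  by rewrite mulnCA [X * _]mulnCA leq_pmul2l.
rewrite /c in h3.
have hX : m <= X by rewrite /X leq_pmulr.
have hrn : r * (m + 1) <= r * n by rewrite leq_mul2l; apply/orP; right; lia.
rewrite -/X mulnDl mulnBl in h3.
have hXn : m * n <= X * n by rewrite leq_mul2r hX orbT.
rewrite mulnDr muln1 in hrn.
rewrite mulnDl !mulnS.
have hXm : X = m * r by [].
lia.
Qed.


Lemma shrink_set (V : finType) (A : {set V}) t :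
  t <= #|A| -> exists B : {set V}, B \subset A /\ #|B| = t.
Proof.
case/card_geqP => s [us ss sA]; exists [set x in s]; split.
  by apply/subsetP => x; rewrite inE => /sA.
by rewrite cardsE; move/card_uniqP: us => ->.
Qed.

Lemma card_bigcup_le (V : finType) (I : finType) (F : I -> {set V}) :
  #|\bigcup_(i : I) F i| <= \sum_(i : I) #|F i|.
Proof.
apply: (big_ind2 (fun (A : {set V}) n => #|A| <= n)) => //.
  by rewrite cards0.
move=> A1 n1 A2 n2 h1 h2; apply: leq_trans (leq_card_setU A1 A2) _.
exact: leq_add.
Qed.

Lemma card_set_sum (V : finType) (B : {set V}) (P : pred V) :
  #|[set y in B | P y]| = \sum_(y in B) P y.
Proof.
rewrite -sum1_card big_mkcond [RHS]big_mkcond /=; apply: eq_bigr => y _.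
by rewrite inE; case: (y \in B); case: (P y).
Qed.

Lemma pigeon (V : finType) (Gd W : {set V}) (p : V -> {set V}) t :
  (forall u, u \in Gd -> p u \subset W) -> (t - 1) * 2 ^ #|W| < #|Gd| ->
  exists X, t <= #|[set u in Gd | p u == X]|.
Proof.
move=> hp hG; apply/existsP/negbNE/negP; rewrite negb_exists => /forallP hall.
move: hG; apply/negP; rewrite -leqNgt.
rewrite -sum1_card (partition_big p (fun X => X \in powerset W)); last first.
  by move=> u uG; rewrite powersetE hp.
rewrite -card_powerset mulnC -sum_nat_const.
apply: leq_sum => X _.
have := hall X; rewrite -ltnNge => h.
rewrite sum1dep_card.
apply: leq_trans (_ : _ <= #|[set u in Gd | p u == X]|) _; last by lia.
by apply: subset_leq_card; apply/subsetP=> u; rewrite !inE.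
Qed.


Lemma es_arith1 (m s n g L r T t : nat) : s = r.+1 ->
  s*T*((m*s+s)*n) <= m*s*L + s*T*(m*s*(s*T) + m*n) -> L <= g*(s*T) + n*(r*T + t) ->
  s * (T * n) <= s * (m*g*T + m*n*t + m*s*T*T).
Proof.
move=> -> h1 h2.
have h3 : m * r.+1 * L <= m * r.+1 * (g * (r.+1 * T) + n * (r * T + t)).
  by rewrite leq_mul2l h2 orbT.
have := leq_trans h1 (leq_add h3 (leqnn _)).
nia.
Qed.

Lemma es_arith2 (m s n g t : nat) : 0 < m -> 0 < t ->
  (2 *  m *t) * n <= m*g*(2 *  m *t) + m*n*t + m*s*(2 *  m *t)*(2 *  m *t) ->
  n <= 2* m *g + 4*(m* m *s*t).
Proof.
move=> m0 t0 h.
have h' : (m * t) * (2 * n) <= (m * t) * (2 *  m *g + n + 4*(m* m *s*t)) by nia.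
rewrite leq_pmul2l ?muln_gt0 ?m0 ?t0 // in h'.
lia.
Qed.

Lemma deg_weaken (m r n d : nat) :
  (m * r.+1 + r.+1) * n <= m * r.+1 * d + m * n ->
  (m * r + r) * n <= m * r * d + m * n.
Proof.
move=> h.
have h' : r.+1 * ((m * r + r) * n) <= r.+1 * (m * r * d + m * n).
  have : r * ((m * r.+1 + r.+1) * n) <= r * (m * r.+1 * d + m * n).
    by rewrite leq_mul2l h orbT.
  nia.
by rewrite leq_pmul2l in h'.
Qed.


Definition Kparts (V : finType) (e : rel V) (S : {set V}) s t
  (A : 'I_s -> {set V}) : Prop :=
  (forall i, A i \subset S /\ t <= #|A i|) /\
  (forall i j, i != j -> forall x y, x \in A i -> y \in A j -> e x y).

Lemma ES (m r : nat) : 0 < m -> forall t, exists N, forall (V : finType) (e : rel V),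
  symmetric e -> irreflexive e -> forall S : {set V}, N <= #|S| ->
  (forall x, x \in S -> (m * r + r) * #|S| <= m * r * degS e S x + m * #|S|) ->
  exists A : 'I_r.+1 -> {set V}, Kparts e S t A.
Proof.
move=> m0; elim: r => [|r IH] t.
  exists t => V e hs hi S hN _.
  case: (shrink_set hN) => B [BS cB].
  exists (fun _ => B); split; first by move=> _; rewrite cB.
  by move=> i j; rewrite !ord1 eqxx.
case: (posnP t) => [t0|tpos].
  exists 0 => V e hs hi S _ _; exists (fun _ => set0); split.
    by move=> _; rewrite sub0set t0.
  by move=> i j _ x y; rewrite inE.
pose T := 2 * m * t.
case: (IH T) => N0 HN0.
pose s := r.+1.
pose G0 := (t - 1) * 2 ^ (s * T).
exists (N0 + 2 * m * G0 + 4 * (m * m * s * t) + 1).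
move=> V e hs hi S hN hdeg.
have [A [hA hK]] : exists A : 'I_s -> {set V}, Kparts e S T A.
  apply: (HN0 V e hs hi S); first by lia.
  by move=> x xS; apply: deg_weaken; apply: hdeg.
pose A' (i : 'I_s) := odflt set0 [pick B : {set V} | (B \subset A i) && (#|B| == T)].
have hA' : forall i, A' i \subset A i /\ #|A' i| = T.
  move=> i; rewrite /A'; case: pickP => [B /andP [h1 /eqP h2] | none] //=.
  have [B [h1 h2]] := shrink_set (proj2 (hA i)).
  by have := none B; rewrite h1 h2 eqxx.
pose W := \bigcup_(i : 'I_s) A' i.
have hW : #|W| <= s * T.
  apply: leq_trans (card_bigcup_le _) _.
  rewrite (eq_bigr (fun _ => T)); last by move=> i _; rewrite (proj2 (hA' i)).
  by rewrite sum_nat_const card_ord.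
have A'S : forall i, A' i \subset S.
  by move=> i; apply: subset_trans (proj1 (hA' i)) (proj1 (hA i)).
have WS : W \subset S by apply/bigcupsP => i _; apply: A'S.
have A'W : forall i, A' i \subset W by move=> i; apply: (bigcup_sup i).
pose U := S :\: W.
pose good u := [forall i, t <= \sum_(y in A' i) e u y].
pose Gd := [set u in U | good u].
pose p u := [set y in W | e u y].
pose n := #|S|.
have hU : #|U| <= n by apply: subset_leq_card; apply: subsetDl.
pose L := \sum_(i : 'I_s) \sum_(w in A' i) \sum_(u in U) e w u.
have h1 : s * T * ((m * s + s) * n) <= m * s * L + s * T * (m * s * (s * T) + m * n).
  have hw : forall i w, w \in A' i -> (m * s + s) * n <=
      m * s * (\sum_(u in U) e w u) + (m * s * (s * T) + m * n).
    move=> i w wA.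
    have wS : w \in S by apply: (subsetP (A'S i)).
    have hd : degS e S w <= \sum_(u in U) e w u + s * T.
      rewrite /degS (big_setID W) /= addnC leq_add2l.
      apply: leq_trans hW; rewrite -sum1_card.
      apply: leq_trans (_ : \sum_(i in S :&: W) 1 <= _).
        by apply: leq_sum => y _; case: (e w y).
      rewrite !sum1_card; apply: subset_leq_card; apply: subsetIr.
    have := hdeg w wS; rewrite -/s -/n => hd2.
    have : m * s * degS e S w <= m * s * (\sum_(u in U) e w u + s * T).
      by rewrite leq_mul2l hd orbT.
    rewrite mulnDr; lia.
  have : \sum_(i : 'I_s) \sum_(w in A' i) ((m * s + s) * n) <=
         \sum_(i : 'I_s) \sum_(w in A' i) (m * s * (\sum_(u in U) e w u) + (m * s * (s * T) + m * n)).
    by apply: leq_sum => i _; apply: leq_sum => w wA; apply: hw wA.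
  rewrite (eq_bigr (fun _ => T * ((m * s + s) * n))); last first.
    by move=> i _; rewrite sum_nat_const (proj2 (hA' i)).
  rewrite sum_nat_const card_ord.
  rewrite (eq_bigr (fun i => m * s * (\sum_(w in A' i) \sum_(u in U) e w u) +
                             T * (m * s * (s * T) + m * n))); last first.
    by move=> i _; rewrite big_split /= -big_distrr sum_nat_const (proj2 (hA' i)).
  rewrite big_split /= -big_distrr sum_nat_const card_ord -/L.
  by rewrite !mulnA.
have h2 : L <= #|Gd| * (s * T) + n * (r * T + t).
  have -> : L = \sum_(u in U) \sum_(i : 'I_s) \sum_(w in A' i) e u w.
    rewrite /L (eq_bigr (fun i => \sum_(u in U) \sum_(w in A' i) e w u)); last first.
      by move=> i _; rewrite exchange_big.
    rewrite exchange_big; apply: eq_bigr => u _; apply: eq_bigr => i _.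
    by apply: eq_bigr => w _; rewrite hs.
  have hR : forall u, u \in U -> \sum_(i : 'I_s) \sum_(w in A' i) e u w <=
                                 (u \in Gd) * (s * T) + (r * T + t).
    move=> u uU.
    have hle : forall i, \sum_(w in A' i) e u w <= T.
      move=> i; rewrite -(proj2 (hA' i)) -sum1_card; apply: leq_sum => w _.
      by case: (e u w).
    case gu: (good u).
      have -> : u \in Gd by rewrite inE uU gu.
      rewrite mul1n; apply: leq_trans (leq_addr _ _).
      apply: leq_trans (_ : \sum_(i : 'I_s) T <= _).
        by apply: leq_sum => i _; apply: hle.
      by rewrite sum_nat_const card_ord.
    move/negbT: gu; rewrite negb_forall => /existsP [j]; rewrite -ltnNge => hj.
    rewrite (bigD1 j) //=; apply: leq_trans (leq_addl _ _).
    rewrite addnC; apply: leq_add; last by apply: ltnW.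
    apply: leq_trans (_ : \sum_(i | i != j) T <= _).
      by apply: leq_sum => i _; apply: hle.
    by rewrite sum_nat_const cardC1 card_ord.
  apply: leq_trans (_ : _ <= \sum_(u in U) ((u \in Gd) * (s * T) + (r * T + t))) _.
    by apply: leq_sum.
  rewrite big_split /= sum_nat_const -big_distrl /=.
  apply: leq_add; last by apply: leq_mul.
  rewrite leq_mul2r; apply/orP; right.
  rewrite -card_set_sum; apply: subset_leq_card; apply/subsetP => u.
  by rewrite !inE => /andP [_ ->].
have hG : G0 < #|Gd|.
  rewrite ltnNge; apply/negP => hg.
  have h3 := es_arith1 (erefl s) h1 h2.
  rewrite leq_pmul2l // in h3.
  have h4 := es_arith2 m0 tpos h3.
  have : 2 * m * #|Gd| <= 2 * m * G0 by rewrite leq_mul2l hg orbT.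
  rewrite -/n in hN; lia.
have hpW : forall u, u \in Gd -> p u \subset W.
  by move=> u _; apply/subsetP => y; rewrite inE => /andP [].
have hGW : (t - 1) * 2 ^ #|W| < #|Gd|.
  apply: leq_ltn_trans hG; rewrite /G0 leq_mul2l; apply/orP; right.
  by rewrite leq_pexp2l.
case: (pigeon hpW hGW) => X hX.
pose Y := [set u in Gd | p u == X].
have : 0 < #|Y| by apply: leq_trans tpos hX.
case/card_gt0P => u0 u0Y.
have u0G : u0 \in Gd by move: u0Y; rewrite inE => /andP [].
have pu0 : p u0 = X by move: u0Y; rewrite inE => /andP [_ /eqP].
have u0good : good u0 by move: u0G; rewrite inE => /andP [].
have YS : Y \subset S.
  apply/subsetP => u; rewrite !inE => /andP [/andP [/andP [_ uS] _] _]; exact: uS.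
have hY : forall u, u \in Y -> p u = X by move=> u; rewrite inE => /andP [_ /eqP].
pose B (i : 'I_s.+1) := if unlift ord_max i is Some j then [set y in A' j | e u0 y] else Y.
exists B; split.
  move=> i; case: (unliftP ord_max i) => [j|] ->; rewrite /B ?liftK ?unlift_none.
    split.
      apply/subsetP => y; rewrite inE => /andP [yA _].
      exact: (subsetP (A'S j)).
    rewrite card_set_sum; exact: (forallP u0good j).
  by split.
move=> i i'; case: (unliftP ord_max i) => [j|] ->; case: (unliftP ord_max i') => [j'|] ->;
  rewrite /B ?liftK ?unlift_none //.
- rewrite (inj_eq (@lift_inj _ ord_max)) => jj' x y.
  rewrite !inE => /andP [xA _] /andP [yA _].
  exact: (hK j j' jj' x y (subsetP (proj1 (hA' j)) x xA) (subsetP (proj1 (hA' j')) y yA)).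
- move=> _ x y; rewrite inE => /andP [xA ex] yY.
  have : x \in p y by rewrite (hY y yY) -pu0 inE ex (subsetP (A'W j)).
  by rewrite inE => /andP [_ hyx]; rewrite hs.
- move=> _ x y xY; rewrite inE => /andP [yA ey].
  have : y \in p x by rewrite (hY x xY) -pu0 inE ey (subsetP (A'W j')).
  by rewrite inE => /andP [].
- by rewrite eqxx.
Qed.


Lemma card_sum_pred (T : finType) (P : pred T) : #|[set p | P p]| = \sum_p P p.
Proof.
rewrite -sum1_card big_mkcond [RHS]big_mkcond /=; apply: eq_bigr => y _.
by rewrite inE; case: (P y).
Qed.

Lemma ordered_strict n (R : rel 'I_n) : symmetric R -> irreflexive R ->
  \sum_(x : 'I_n) \sum_(y : 'I_n) R x y =
  2 * #|[set p : 'I_n * 'I_n | (val p.1 < val p.2) && R p.1 p.2]|.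
Proof.
move=> hs hi.
rewrite pair_big /= card_sum_pred.
have -> : \sum_(p : 'I_n * 'I_n) R p.1 p.2 =
   \sum_(p : 'I_n * 'I_n) ((val p.1 < val p.2) && R p.1 p.2 : nat) +
   \sum_(p : 'I_n * 'I_n) ((val p.2 < val p.1) && R p.1 p.2 : nat).
  rewrite -big_split /=; apply: eq_bigr => [[x y]] _ /=.
  case: (ltngtP (val x) (val y)) => h /=; rewrite ?addn0 ?add0n //.
  have xy : x = y by apply: val_inj.
  by rewrite xy hi.
rewrite mulSn mul1n; congr (_ + _).
rewrite (reindex_inj (h := fun p : 'I_n * 'I_n => (p.2, p.1))) /=; last first.
  by move=> [a b] [c d] /= [-> ->].
by apply: eq_bigr => [[x y]] _ /=; rewrite hs.
Qed.

Lemma KN_sym N : symmetric (fun x y : 'I_N => x != y).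
Proof. by move=> x y; rewrite eq_sym. Qed.
Lemma KN_irr N : irreflexive (fun x y : 'I_N => x != y).
Proof. by move=> x; rewrite eqxx. Qed.
Definition KN (N : nat) : sgraph := SGraph (@KN_sym N) (@KN_irr N).

Lemma nedges_KN N : 2 * nedges (KN N) = N * (N - 1).
Proof.
rewrite /nedges /edges.
have := @ordered_strict N (fun x y => x != y) (@KN_sym N) (@KN_irr N).
move=> <-.
rewrite (eq_bigr (fun _ => N - 1)); first by rewrite sum_nat_const card_ord.
move=> x _; rewrite -card_sum_pred.
have -> : [set p : 'I_N | x != p] = [set~ x].
  by apply/setP => y; rewrite !inE eq_sym.
by rewrite cardsC1 card_ord subn1.
Qed.

Lemma KN_noiso N : 2 <= N -> no_isolated (KN N).
Proof.
move=> hN x; simpl in x.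
have h0 : 0 < N by lia.
have h1 : 1 < N by lia.
case: (eqVneq x (Ordinal h0)) => hx.
  by exists (Ordinal h1); rewrite /= hx.
by exists (Ordinal h0).
Qed.

Lemma fadj_sym n (F : {set 'I_n * 'I_n}) : symmetric (fadj F).
Proof. by move=> x y; rewrite /fadj orbC. Qed.

Lemma fadj_irr n (F : {set 'I_n * 'I_n}) :
  F \subset [set p : 'I_n * 'I_n | val p.1 < val p.2] -> irreflexive (fadj F).
Proof.
move=> hF x; rewrite /fadj orbb; apply/negP => /(subsetP hF); by rewrite inE ltnn.
Qed.

Lemma E2_fadj n (F : {set 'I_n * 'I_n}) :
  F \subset [set p : 'I_n * 'I_n | val p.1 < val p.2] ->
  E2 (fadj F) setT = 2 * #|F|.
Proof.
move=> hF.
rewrite /E2 /degS.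
have -> : \sum_(x in [set: 'I_n]) \sum_(y in [set: 'I_n]) fadj F x y =
          \sum_(x : 'I_n) \sum_(y : 'I_n) fadj F x y.
  by apply: eq_big => // x; rewrite ?inE // => _; apply: eq_bigl => y; rewrite inE.
rewrite (ordered_strict (fadj_sym F) (fadj_irr hF)); congr (_ * _).
apply: eq_card => [[x y]]; rewrite !inE /fadj /=.
case hxy: ((x, y) \in F).
  by have := subsetP hF _ hxy; rewrite inE /= => ->.
rewrite orFb; case hyx: ((y, x) \in F) => //.
by have := subsetP hF _ hyx; rewrite inE /= => h; rewrite ltnNge (ltnW h).
by rewrite andbF.
Qed.

Lemma embed_parts n (F : {set 'I_n * 'I_n}) (H : sgraph) q (c : 'I_(nv H) -> 'I_q)
  (S : {set 'I_n}) (A : 'I_q -> {set 'I_n}) (x0 : 'I_n) :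
  (forall x y, adj x y -> c x != c y) -> irreflexive (fadj F) ->
  Kparts (fadj F) S (nv H) A -> contains F H.
Proof.
move=> hc hi [hA hK].
pose f (u : 'I_(nv H)) := nth x0 (enum (A (c u))) u.
have fA : forall u, f u \in A (c u).
  move=> u; rewrite /f -mem_enum; apply: mem_nth.
  by rewrite -cardE; apply: leq_trans (ltn_ord u) (proj2 (hA (c u))).
exists f; split.
  move=> u w hf.
  case: (eqVneq (c u) (c w)) => hcw.
    have := hf; rewrite /f hcw => h.
    apply: val_inj; apply/eqP.
    have hu : (u : nat) < size (enum (A (c w))).
      by rewrite -cardE; apply: leq_trans (ltn_ord u) (proj2 (hA (c w))).
    have hw : (w : nat) < size (enum (A (c w))).
      by rewrite -cardE; apply: leq_trans (ltn_ord w) (proj2 (hA (c w))).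
    by rewrite -(nth_uniq x0 hu hw (enum_uniq _)) h.
  have := hK _ _ hcw _ _ (fA u) (fA w).
  by rewrite hf hi.
move=> u w huw.
exact: hK _ _ (hc _ _ huw) _ _ (fA u) (fA w).
Qed.


Definition mono (G : sgraph) q (d : 'I_(nv G) -> 'I_q) : nat :=
  \sum_(z : 'I_(nv G)) \sum_(y : 'I_(nv G)) (adj z y && (d z == d y)).

Lemma mono_split (G : sgraph) q (d : 'I_(nv G) -> 'I_q) x :
  mono d = \sum_y (adj x y && (d y == d x)) + \sum_y (adj x y && (d y == d x)) +
           \sum_(z | z != x) \sum_(y | y != x) (adj z y && (d z == d y)).
Proof.
rewrite /mono (bigD1 x) //= -addnA; congr (_ + _).
  by apply: eq_bigr => y _; rewrite eq_sym.
rewrite (eq_bigr (fun z => (adj z x && (d z == d x)) +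
    \sum_(y | y != x) (adj z y && (d z == d y)))); last first.
  by move=> z _; rewrite (bigD1 x).
rewrite big_split /=; congr (_ + _).
rewrite [RHS](bigD1 x) //= adj_irr /= add0n.
by apply: eq_bigr => z _; rewrite adj_sym eq_sym.
Qed.

Lemma mono_recolor (G : sgraph) q (c : 'I_(nv G) -> 'I_q) x j :
  let c' := fun z => if z == x then j else c z in
  mono c' + 2 * \sum_y (adj x y && (c y == c x)) =
  mono c + 2 * \sum_y (adj x y && (c y == j)).
Proof.
move=> c'.
have hb : \sum_y (adj x y && (c' y == c' x)) = \sum_y (adj x y && (c y == j)).
  apply: eq_bigr => y _; rewrite /c' eqxx.
  case: (eqVneq y x) => [->|]; first by rewrite adj_irr.
  by [].
have hC : \sum_(z | z != x) \sum_(y | y != x) (adj z y && (c' z == c' y)) =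
          \sum_(z | z != x) \sum_(y | y != x) (adj z y && (c z == c y)).
  apply: eq_bigr => z zx; apply: eq_bigr => y yx.
  by rewrite /c' (negbTE zx) (negbTE yx).
rewrite (mono_split c' x) (mono_split c x) hb hC; lia.
Qed.

Lemma maxcut (G : sgraph) q : 0 < q ->
  exists c : 'I_(nv G) -> 'I_q,
    q * #|[set p in edges G | c p.1 == c p.2]| <= nedges G.
Proof.
move=> q0.
pose i0 := Ordinal q0.
pose c0 : {ffun 'I_(nv G) -> 'I_q} := [ffun _ => i0].
case: (@arg_minnP _ c0 xpredT (fun d : {ffun 'I_(nv G) -> 'I_q} => mono d) (erefl true)).
move=> c _ cmin.
exists c.
have loc : forall x j, \sum_y (adj x y && (c y == c x)) <= \sum_y (adj x y && (c y == j)).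
  move=> x j.
  pose c'' : {ffun 'I_(nv G) -> 'I_q} := [ffun z => if z == x then j else c z].
  have h := cmin c'' erefl.
  have e1 := mono_recolor c x j.
  have ec : mono c'' = mono (fun z => if z == x then j else c z).
    by apply: eq_bigr => z _; apply: eq_bigr => y _; rewrite !ffunE.
  rewrite -(@leq_pmul2l 2) // -(leq_add2l (mono (fun z => if z == x then j else c z))) e1 leq_add2r.
  by rewrite -ec.
have hq : forall x, q * \sum_y (adj x y && (c y == c x)) <= \sum_y adj x y.
  move=> x.
  have -> : \sum_y (adj x y : nat) = \sum_(j : 'I_q) \sum_y (adj x y && (c y == j)).
    rewrite exchange_big /=; apply: eq_bigr => y _.
    rewrite (bigD1 (c y)) //= eqxx andbT big1 ?addn0 // => k hk.
    by rewrite eq_sym (negbTE hk) andbF.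
  rewrite -{1}(card_ord q) -sum_nat_const; apply: leq_sum => j _; exact: loc.
have hsum : \sum_(x : 'I_(nv G)) q * \sum_(y : 'I_(nv G)) (adj x y && (c y == c x)) <= \sum_(x : 'I_(nv G)) \sum_(y : 'I_(nv G)) (adj x y : nat).
  by apply: leq_sum => x _; apply: hq.
rewrite -big_distrr /= in hsum.
have hmono : \sum_x \sum_y (adj x y && (c y == c x)) =
   2 * #|[set p in edges G | c p.1 == c p.2]|.
  have hs : symmetric (fun x y : 'I_(nv G) => adj x y && (c y == c x)).
    by move=> x y; rewrite adj_sym eq_sym.
  have hi : irreflexive (fun x y : 'I_(nv G) => adj x y && (c y == c x)).
    by move=> x; rewrite adj_irr.
  rewrite (ordered_strict hs hi); congr (_ * _); apply: eq_card => p.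
  by rewrite !inE andbA [c p.2 == _]eq_sym.
have hall : \sum_(x : 'I_(nv G)) \sum_(y : 'I_(nv G)) (adj x y : nat) = 2 * nedges G.
  by rewrite (ordered_strict (@adj_sym G) (@adj_irr G)).
by rewrite hmono hall mulnCA leq_pmul2l in hsum.
Qed.


Lemma final_arith (m a p k N : nat) : 1 <= a -> 1 <= p -> 6 * p * (a.+1 * a.+1) <= m ->
  2 * p * N <= k -> 2 * m * a.+1 * k < (m * a + 3 * a.+1) * (N.+1 * N) ->
  (a * p + p - a) * k * 2 <= a * p * (N * (N - 1)).
Proof.
move=> a1 p1 hm hN hD.
set D := m * a + 3 * a.+1 in hD.
have hpa : a <= a * p + p by nia.
have e1 : N.+1 * N = N * (N - 1) + 2 * N.
  case: (N) => [|n]; first by []. 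
  rewrite subSS subn0; nia.
rewrite e1 in hD.
suff : D * ((a * p + p - a) * k * 2) <= D * (a * p * (N * (N - 1))).
  by rewrite leq_pmul2l // /D; lia.
have h1 : a * p * (2 * m * a.+1 * k) <= a * p * (D * (N * (N - 1)) + D * (2 * N)).
  by rewrite leq_mul2l -mulnDr ltnW ?orbT.
have h2 : 2 * a * p * D * N <= a * D * k.
  have : a * D * (2 * p * N) <= a * D * k by rewrite leq_mul2l hN orbT.
  nia.
have h3 : 6 * p * (a.+1 * a.+1) * k <= m * a * a * k.
  have : a <= a * a by nia.
  nia.
have h4 : m * a * a * k <= a * D * k by rewrite /D; nia.
have e2 : a * p + p - a + a = p * a.+1 by nia.
have h5 : D * ((a * p + p - a) * k * 2) + 2 * a * D * k = 2 * D * k * (p * a.+1) by rewrite -e2; nia.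
rewrite /D in h1 h2 h4 h5 *.
lia.
Qed.

Lemma arith_pN (p r k N D m : nat) : m <= D -> 1 <= m ->
  D * (N * (N - 1)) <= 2 * m * r * k -> 16 * p * p * r + 4 * p * p + 1 <= k ->
  2 * p * N <= k.
Proof.
move=> hmD m1 h hk.
have h1 : m * (N * (N - 1)) <= m * (2 * r * k).
  apply: leq_trans (_ : D * (N * (N - 1)) <= _); first by rewrite leq_mul2r hmD orbT.
  move: h; lia.
rewrite leq_pmul2l // in h1.
have h2 : N * N <= 4 * r * k + 1.
  move: h1; case: (N) => [|n] h1; first by []. rewrite subSS subn0 in h1; nia.
rewrite leqNgt; apply/negP => h3.
have h4 : (k + 1) * (k + 1) <= (2 * p * N) * (2 * p * N) by nia.
have h5 : (2 * p * N) * (2 * p * N) <= 4 * p * p * (4 * r * k + 1).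
  have -> : (2 * p * N) * (2 * p * N) = 4 * p * p * (N * N) by nia.
  by rewrite leq_mul2l h2 orbT.
have h6 : k * (16 * p * p * r + 4 * p * p + 1) <= k * k by rewrite leq_mul2l hk orbT.
nia.
Qed.

Lemma arith_Nge (N0 N m r k D : nat) : 2 * (N0 + 1) * (N0 + 1) <= k -> D <= 4 * m * r ->
  1 <= m -> 1 <= r -> 2 * m * r * k < D * (N.+1 * N) -> N0 <= N.
Proof.
move=> hk hD m1 r1 h.
rewrite leqNgt; apply/negP => hN.
have h1 : D * (N.+1 * N) <= 4 * m * r * (N.+1 * N) by rewrite leq_mul2r hD orbT.
have h2 : N.+1 * N <= (N0 + 1) * (N0 + 1) by nia.
have h3 : 4 * m * r * (N.+1 * N) <= 4 * m * r * ((N0 + 1) * (N0 + 1)) by rewrite leq_mul2l h2 orbT.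
have h4 : 2 * m * r * (2 * (N0 + 1) * (N0 + 1)) <= 2 * m * r * k by rewrite leq_mul2l hk orbT.
nia.
Qed.

Lemma arith_Nub (N D m r k : nat) : 1 <= D -> D * (N * (N - 1)) <= 2 * m * r * k ->
  N <= 2 * m * r * k + 1.
Proof.
move=> hD h; case: N h => [|n] //=; rewrite subSS subn0 => h; nia.
Qed.

Lemma arith_N0 (m N1 N : nat) : m * N1 * N1 + 2 <= N -> m * (N1 * (N1 - 1)) < N * (N - 1).
Proof. move=> h; nia. Qed.


Lemma chi_ge fam rho (H : sgraph) j : is_min_chi fam rho -> fam H -> colorable H j -> rho <= j.
Proof.
move=> [_ hmin] hH hc.
have ex : exists j, `[< colorable H j >] by exists j; apply/asboolP.
case: (ex_minnP ex) => j0 /asboolP hj0 hmin0.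
apply: leq_trans (hmin0 j _); last exact/asboolP.
apply: (hmin H j0 hH); split => // j' hj'; apply: hmin0; exact/asboolP.
Qed.

Lemma upper_nat fam rho (G : sgraph) : is_min_chi fam rho -> 3 <= rho ->
  (rho - 2) * nedges G <= (rho - 1) * ex G fam.
Proof.
move=> hmin rho3.
have q0 : 0 < rho - 1 by lia.
case: (maxcut G q0) => c hc.
pose F := [set p in edges G | c p.1 != c p.2].
have hFm : #|F| + #|[set p in edges G | c p.1 == c p.2]| = nedges G.
  rewrite /F !card_set_sum /nedges -sum1_card -big_split /=.
  by apply: eq_bigr => p _; case: (c p.1 == c p.2).
have hfree : Hfree F fam.
  move=> H hH [f [finj hf]].
  have : colorable H (rho - 1).
    exists (fun u => c (f u)) => u w huw.
    move: (hf u w huw); rewrite /fadj !inE /= => /orP [] /andP [_ h] //.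
    by rewrite eq_sym.
  move/(chi_ge hmin hH); lia.
have hex : #|F| <= ex G fam.
  rewrite /ex; apply: (leq_bigmax_cond F).
  apply/andP; split; last exact/asboolP.
  by apply/subsetP => p; rewrite inE => /andP [].
have e1 : (rho - 1) * nedges G = (rho - 1) * #|F| + (rho - 1) * #|[set p in edges G | c p.1 == c p.2]|.
  by rewrite -hFm mulnDr.
have e2 : (rho - 1) * #|F| <= (rho - 1) * ex G fam by rewrite leq_mul2l hex orbT.
have e3 : (rho - 2) * nedges G + nedges G = (rho - 1) * nedges G.
  by rewrite addnC -mulSn; congr (_ * _); lia.
lia.
Qed.

Lemma lower_nat fam a (H0 : sgraph) (c0 : 'I_(nv H0) -> 'I_a.+2) p :
  1 <= a -> 1 <= p -> fam H0 -> (forall x y, adj x y -> c0 x != c0 y) ->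
  exists K, forall k, K <= k -> exists G : sgraph,
    no_isolated G /\ ex G fam < k /\ (a * p + p - a) * k <= a * p * nedges G.
Proof.
move=> a1 p1 hH0 hc0.
pose r := a.+1.
pose m := 6 * p * (r * r) + 2 * r + 1.
have m1 : 1 <= m by lia.
have [NE HNE] := ES r m1 (nv H0).
pose N1 := NE + m + 2.
pose N0 := m * N1 * N1 + 2.
pose D := m * r - m + 3 * r.
have hmr : m <= m * r by rewrite leq_pmulr.
have hDm : m <= D.
  have : m * 2 <= m * r by rewrite leq_mul2l; apply/orP; right; rewrite /r; lia.
  rewrite /D; lia.
have hD4 : D <= 4 * m * r.
  have : 1 * r <= m * r by rewrite leq_mul2r m1 orbT.
  rewrite /D; lia.
exists (2 * (N0 + 1) * (N0 + 1) + (16 * p * p * r + 4 * p * p + 1)) => k hk.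
pose Pk N := D * (N * (N - 1)) <= 2 * m * r * k.
have exN : exists N, Pk N by exists 0; rewrite /Pk mul0n muln0.
have ubN : forall N, Pk N -> N <= 2 * m * r * k + 1.
  move=> N hN; apply: (arith_Nub _ hN); lia.
case: (ex_maxnP exN ubN) => N PN Nmax.
have hnot : 2 * m * r * k < D * (N.+1 * N).
  rewrite ltnNge; apply/negP => h.
  have := Nmax N.+1; rewrite /Pk subSS subn0 => /(_ h); by rewrite ltnn.
have hN0 : N0 <= N.
  apply: (arith_Nge (k := k) (D := D) (m := m) (r := r)) => //; first by lia.
have hpN : 2 * p * N <= k.
  apply: (arith_pN (D := D) (m := m) hDm m1 PN); lia.
have N2 : 2 <= N by rewrite /N0 in hN0; lia.
have N0pos : 0 < N by lia.
exists (KN N); split; first exact: KN_noiso.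
split.
  have k1 : 1 <= k by lia.
  suff : ex (KN N) fam <= k.-1 by lia.
  apply/bigmax_leqP => F /andP [hFe /asboolP hfree].
  rewrite leqNgt; apply/negP => hFk.
  have hF' : F \subset [set p : 'I_N * 'I_N | val p.1 < val p.2].
    apply: subset_trans hFe _; apply/subsetP => q; rewrite !inE => /andP [] //.
  have hs := fadj_sym F.
  have hi := fadj_irr hF'.
  have hE2 := E2_fadj hF'.
  have [S [hS hdeg]] : exists S : {set 'I_N}, N1 < #|S| /\
    forall x, x \in S -> (m * r + r) * #|S| <= m * r * degS (fadj F) S x + m * #|S|.
    apply: dense_mindeg => //.
    - by rewrite /m; lia.
    - by rewrite /N1; lia.
    - by rewrite card_ord; apply: arith_N0.
    - rewrite card_ord hE2; apply: leq_trans PN _.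
      have : k <= #|F| by lia.
      move=> h; have : m * r * (2 * k) <= m * r * (2 * #|F|) by rewrite leq_mul2l leq_mul2l h !orbT.
      lia.
  have [A hA] := HNE _ (fadj F) hs hi S (ltnW (leq_ltn_trans (leq_addr _ _) (leq_ltn_trans (leq_addr 2 _) hS))) hdeg.
  by apply: (hfree H0 hH0); apply: (embed_parts (Ordinal N0pos) hc0 hi hA).
have hE := nedges_KN N.
have hDe : D = m * a + 3 * a.+1 by rewrite /D /r mulnS; lia.
rewrite hDe in hnot.
have := final_arith (m := m) (k := k) a1 p1 _ hpN hnot.
rewrite -hE => h.
have : (a * p + p - a) * k * 2 <= a * p * nedges (KN N) * 2.
  apply: leq_trans (h _) _; first by rewrite /m /r; lia.
  by rewrite [2 * _]mulnC mulnA.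
by rewrite leq_pmul2r.
Qed.

Unset Implicit Arguments.
Local Open Scope ring_scope.

Theorem theorem1p1 (fam : sgraph -> Prop) (rho : nat) :
  (forall H, fam H -> no_isolated H) ->
  is_min_chi fam rho -> (3 <= rho)%N ->
  forall eps : rat, 0 < eps ->
  exists K : nat, forall k : nat, (K <= k)%N ->
    (forall G : sgraph, no_isolated G -> (ex G fam < k)%N ->
       (nedges G)%:R <= (1 + 1 / (rho - 2)%N%:R + eps) * k%:R) /\
    (exists G : sgraph, no_isolated G /\ (ex G fam < k)%N /\
       (1 + 1 / (rho - 2)%N%:R - eps) * k%:R <= (nedges G)%:R).
Proof.
move=> _ hmin rho3 eps eps0.
have [a rhoE] : exists a, rho = a.+2 by exists rho.-2; lia.
have a1 : (1 <= a)%N by lia.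
have ra : (rho - 2)%N = a by lia.
rewrite ra.
have Apos : 0 < a%:R :> rat by rewrite ltr0n.
pose p := Num.bound (eps^-1).
have ei : 0 < eps^-1 by rewrite invr_gt0.
have hp : eps^-1 < p%:R := archi_boundP (ltW ei).
have p1 : (1 <= p)%N.
  have : 0 < p%:R :> rat by apply: lt_trans hp; rewrite invr_gt0.
  by rewrite ltr0n.
have Ppos : 0 < p%:R :> rat by rewrite ltr0n.
have hpe : p%:R^-1 <= eps.
  rewrite -(ler_pM2l Ppos) mulfV ?gt_eqF //.
  have h : eps^-1 * eps <= p%:R * eps by rewrite ler_pM2r // ltW.
  by rewrite mulVf ?gt_eqF in h.
have hmin0 := hmin.
case: hmin0 => [[H0 [hH0 [[c0 hc0] _]]] hmin'].
rewrite rhoE in c0 hc0.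
have [K HK] := lower_nat a1 p1 hH0 hc0.
exists K => k hk; split.
  move=> G _ hex.
  have hu := upper_nat G hmin rho3.
  rewrite ra rhoE in hu.
  have hu2 : (a * nedges G <= a.+1 * k)%N.
    apply: leq_trans hu _; rewrite leq_mul2l; apply/orP; right; lia.
  have hr : (a * nedges G)%:R <= (a.+1 * k)%:R :> rat by rewrite ler_nat.
  rewrite !natrM in hr.
  rewrite -(ler_pM2l Apos).
  have -> : a%:R * ((1 + 1 / a%:R + eps) * k%:R) = a.+1%:R * k%:R + a%:R * eps * k%:R :> rat.
    rewrite -addn1 natrD; field; by rewrite gt_eqF.
  apply: (le_trans hr); rewrite lerDl; apply: mulr_ge0; last by rewrite ler0n.
  by apply: mulr_ge0; [rewrite ler0n | apply: ltW].
have [G [hG [hex hE]]] := HK k hk.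
exists G; split => //; split => //.
have hr : ((a * p + p - a) * k)%:R <= (a * p * nedges G)%:R :> rat by rewrite ler_nat.
have hap : (a <= a * p + p)%N by nia.
rewrite natrM natrB // natrD !natrM in hr.
apply: le_trans (_ : (1 + 1 / a%:R - p%:R^-1) * k%:R <= _).
  by apply: ler_wpM2r; [rewrite ler0n | rewrite lerD2l lerN2].
rewrite -(ler_pM2l (mulr_gt0 Apos Ppos)).
have -> : a%:R * p%:R * ((1 + 1 / a%:R - p%:R^-1) * k%:R) =
          (a%:R * p%:R + p%:R - a%:R) * k%:R :> rat.
  field; by rewrite !gt_eqF.
exact: hr.
Qed.
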